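(* Let $\delta\in(0,1)$. With probability at least $1-\delta$ over the random draw of the training set $S=(\boldsymbol{x}_1,\dots,\boldsymbol{x}_n)$, every linear classifier $f(\boldsymbol{x})=\langle\boldsymbol{w},\boldsymbol{x}\rangle$ that maximizes the $L^1$-margin $\gamma_1(\boldsymbol{w}):=\min_{i\in[n]}\frac{y_i\langle\boldsymbol{w},\boldsymbol{x}_i\rangle}{\|\boldsymbol{w}\|_1}$ on $S$ satisfies $$\mathbb{E}_{\boldsymbol{x}\sim\mathcal{D}_X}\big[\mathbb{1}[y^*(\boldsymbol{x})f(\boldsymbol{x})\le0]\big]\le4k\sqrt{\frac{2\log(2d)}{n}}+3\sqrt{\frac{\log(2/\delta)}{2n}}.$$
   Context: $\mathcal{D}_X$ is the uniform distribution on $\{\pm1\}^d$. $k$ is a positive odd integer. The vector $\boldsymbol{w}^*\in\mathbb{R}^d$ has its first $k$ coordinates drawn uniformly from $\{\pm1\}^k$ and all other coordinates equal to $0$; the label is $y^*(\boldsymbol{x})=\mathrm{sign}(\langle\boldsymbol{w}^*,\boldsymbol{x}\rangle)$. The training inputs $\boldsymbol{x}_1,\dots,\boldsymbol{x}_n$ are i.i.d. from $\mathcal{D}_X$ and $y_i=y^*(\boldsymbol{x}_i)$. *)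

(* Defs.v *)
From HB Require Import structures.
From mathcomp Require Import all_boot all_order all_algebra.
From mathcomp Require Import boolp reals ereal exp.
Set Implicit Arguments. Unset Strict Implicit. Unset Printing Implicit Defensive.
Import Order.TTheory GRing.Theory Num.Theory.
Local Open Scope ring_scope.

(* The hypercube {+-1}^d, a point encoded by its sign pattern (true = +1). *)
Definition cube (d : nat) := {ffun 'I_d -> bool}.

Definition sample (d n : nat) := {ffun 'I_n -> cube d}.

Section Defs.
Variable R : realType.

Definition sgnb (b : bool) : R := if b then 1 else -1.

Definition dot (d : nat) (w : 'I_d -> R) (x : cube d) : R :=
  \sum_(i < d) w i * sgnb (x i).

Definition l1norm (d : nat) (w : 'I_d -> R) : R := \sum_(i < d) `|w i|.

Definition ystar (d : nat) (wstar : 'I_d -> R) (x : cube d) : R :=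
  Num.sg (dot wstar x).

Definition gamma1 (d n : nat) (wstar : 'I_d -> R) (S : sample d n)
    (w : 'I_d -> R) : \bar R :=
  \big[Order.min/+oo%E]_(i < n)
     ((ystar wstar (S i) * dot w (S i) / l1norm w)%:E).

(* w maximizes the L1 margin on S (among nonzero w, where gamma1 is defined) *)
Definition max_l1_margin (d n : nat) (wstar : 'I_d -> R) (S : sample d n)
    (w : 'I_d -> R) : Prop :=
  (exists i, w i != 0) /\
  forall v : 'I_d -> R, (exists i, v i != 0) ->
    (gamma1 wstar S v <= gamma1 wstar S w)%E.

Definition test_error (d : nat) (wstar w : 'I_d -> R) : R :=
  #|[set x : cube d | ystar wstar x * dot w x <= 0]|%:R / #|{: cube d}|%:R.

Definition probS (d n : nat) (E : sample d n -> Prop) : R :=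
  #|[set S : sample d n | `[< E S >]]|%:R / #|{: sample d n}|%:R.

End Defs.

(* Main.v *)
Require Import Defs.
From HB Require Import structures.
From mathcomp Require Import all_boot all_order all_algebra.
From mathcomp Require Import boolp reals ereal exp.
From mathcomp Require Import classical_sets sequences.
From mathcomp Require Import ring lra.
Set Implicit Arguments. Unset Strict Implicit. Unset Printing Implicit Defensive.
Import Order.TTheory GRing.Theory Num.Theory.
Local Open Scope classical_set_scope.
Local Open Scope ring_scope.

Section Sup.
Variable R : realType.
Definition supW (W : Type) (F : W -> R) : R := sup (range F).

Lemma supW_ub (W : Type) (F : W -> R) M w :
  (forall v, F v <= M) -> F w <= supW F.
Proof.
move=> HM; apply: ub_le_sup; last by exists w.
by exists M => _ [v _ <-]; exact: HM.
Qed.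

Lemma supW_le (W : Type) (F : W -> R) c (w0 : W) :
  (forall v, F v <= c) -> supW F <= c.
Proof.
move=> Hc; apply: ge_sup; first by exists (F w0), w0.
by move=> _ [v _ <-]; exact: Hc.
Qed.
End Sup.

Section ExpBound.
Variable R : realType.

Lemma poly_bound (u : R) : `|u| <= 1/8 ->
  0 <= 28 - 344 * u + 1414 * u^+2 - 3080 * u^+3 + 4060 * u^+4 - 3368 * u^+5
      + 1729 * u^+6 - 504 * u^+7 + 64 * u^+8.
Proof.
move=> hu.
have e : forall n, 0 <= u^+n.*2 by move=> n; rewrite -mul2n exprM exprn_ge0 // sqr_ge0.
have e4 := e 2%N; have e6 := e 3%N; have e8 := e 4%N; move: e4 e6 e8 => /= e4 e6 e8.
have [u0|u0] := leP 0 u.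
  have h1 : u <= 1/8 by move: hu; rewrite ger0_norm.
  have v0 : 0 <= 8 * u by lra.
  have v1 : 8 * u <= 1 by lra.
  have e3 : 512 * u^+3 <= 1.
    have -> : 512 * u^+3 = (8 * u)^+3 by ring.
    by rewrite exprn_ile1.
  have e3' : 0 <= u^+3 by rewrite exprn_ge0.
  have e5 : 64 * u^+5 <= u^+3.
    have -> : 64 * u^+5 = (8 * u)^+2 * u^+3 by ring.
    by rewrite ler_piMl // exprn_ile1.
  have e5' : 0 <= u^+5 by rewrite exprn_ge0.
  have e7 : u^+7 <= u^+5.
    have -> : u^+7 = u^+2 * u^+5 by ring.
    rewrite ler_piMl // expr2.
    have : u <= 1 by lra.
    by move=> h; rewrite mulr_ile1.
  have q : 7 <= 28 - 344 * u + 1414 * u^+2.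
    have id : 1414 * (28 - 344 * u + 1414 * u^+2 - 7) = (1414 * u - 172)^+2 + 110 by ring.
    have := sqr_ge0 (1414 * u - 172); lra.
  lra.
have e2 : 0 <= u^+2 by rewrite sqr_ge0.
have o : forall n, u^+n.*2.+1 <= 0.
  move=> n; rewrite exprS; apply: mulr_le0_ge0; first exact: ltW.
  by rewrite -mul2n exprM exprn_ge0 // sqr_ge0.
have o3 := o 1%N; have o5 := o 2%N; have o7 := o 3%N; move: o3 o5 o7 => /= o3 o5 o7.
lra.
Qed.

Lemma expR_quad (y : R) : `|y| <= 1 -> expR y <= 1 + y + y^+2.
Proof.
move=> hy.
have [u [yu hu]] : exists u : R, y = 8 * u /\ `|u| <= 1/8.
  exists (y / 8); split; first by rewrite mulrC divfK.
  by rewrite normrM normfV (ger0_norm (ler0n _ 8)); lra.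
subst y.
have u1 : 0 < 1 - u by move: hu; rewrite ler_norml; lra.
have p0 : 0 < (1 - u)^+8 by rewrite exprn_gt0.
have h1 : (1 - u)^+8 <= expR (- (8 * u)).
  rewrite -mulrN expRM_natl.
  rewrite lerXn2r ?nnegrE ?expR_ge0 ?(ltW u1) //.
  by have := expR_ge1Dx (- u); rewrite addrC.
have h2 : 1 <= (1 - u)^+8 * (1 + 8 * u + (8 * u)^+2).
  have := poly_bound hu.
  have -> : (1 - u)^+8 * (1 + 8 * u + (8 * u)^+2) = 1 + u^+2 * (28 - 344 * u + 1414 * u^+2 - 3080 * u^+3 + 4060 * u^+4 - 3368 * u^+5
      + 1729 * u^+6 - 504 * u^+7 + 64 * u^+8) by ring.
  move=> hq; rewrite lerDl; apply: mulr_ge0 => //; exact: sqr_ge0.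
rewrite -(ler_pM2l p0); apply: le_trans h2.
rewrite mulrC; apply: le_trans (_ : expR (8 * u) * expR (- (8 * u)) <= _).
  by rewrite ler_pM2l ?expR_gt0.
by rewrite expRxMexpNx_1.
Qed.
End ExpBound.

Section Avg.
Variable R : realType.

Definition avg (A : finType) (f : A -> R) : R := (\sum_a f a) / #|A|%:R.

Lemma avg_le (A : finType) (f g : A -> R) : (forall a, f a <= g a) -> avg f <= avg g.
Proof.
move=> h; rewrite /avg ler_wpM2r ?invr_ge0 ?ler0n //.
by apply: ler_sum => a _; exact: h.
Qed.

Lemma avgD (A : finType) (f g : A -> R) : avg (fun a => f a + g a) = avg f + avg g.
Proof. by rewrite /avg big_split /= mulrDl. Qed.

Lemma avgZ (A : finType) (c : R) (f : A -> R) : avg (fun a => c * f a) = c * avg f.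
Proof. by rewrite /avg -mulr_sumr mulrA. Qed.

Lemma avg_cst (A : finType) (c : R) : (0 < #|A|)%N -> avg (fun _ : A => c) = c.
Proof.
move=> hA; rewrite /avg sumr_const -[c *+ _]mulr_natr mulfK //.
by rewrite pnatr_eq0 -lt0n.
Qed.

Lemma avgB (A : finType) (f g : A -> R) : avg (fun a => f a - g a) = avg f - avg g.
Proof.
by rewrite /avg sumrB mulrBl.
Qed.

Lemma avg_inj (A : finType) (h : A -> A) (f : A -> R) : injective h ->
  avg (fun a => f (h a)) = avg f.
Proof. by move=> hi; rewrite /avg [in RHS](reindex_inj hi). Qed.

Lemma avg_exchange (A B : finType) (f : A -> B -> R) :
  avg (fun a => avg (fun b => f a b)) = avg (fun b => avg (fun a => f a b)).
Proof.
rewrite /avg -!mulr_suml exchange_big /= -!mulrA; congr (_ * _).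
by rewrite mulrC.
Qed.

Lemma jensen_exp (A : finType) (f : A -> R) : (0 < #|A|)%N ->
  expR (avg f) <= avg (fun a => expR (f a)).
Proof.
move=> hA; set m := avg f.
have h : forall a, expR m * (1 + (f a - m)) <= expR (f a).
  move=> a; have -> : expR (f a) = expR m * expR (f a - m).
    by rewrite -expRD addrC subrK.
  by rewrite ler_pM2l ?expR_gt0 // expR_ge1Dx.
apply: le_trans (avg_le h).
by rewrite avgZ avgD avgB avg_cst // avg_cst // subrr addr0 mulr1.
Qed.

Lemma avg_hoef (A : finType) (f : A -> R) c lam : (0 < #|A|)%N ->
  0 <= lam -> lam * c <= 1 -> (forall a, `|f a - avg f| <= c) ->
  avg (fun a => expR (lam * (f a - avg f))) <= expR (lam^+2 * c^+2).
Proof.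
move=> hA l0 lc hc.
have h : forall a, expR (lam * (f a - avg f)) <=
    1 + lam * (f a - avg f) + lam^+2 * c^+2.
  move=> a; apply: le_trans (expR_quad _) _.
    rewrite normrM ger0_norm //; apply: le_trans lc.
    by rewrite ler_wpM2l.
  rewrite lerD2l exprMn ler_wpM2l ?sqr_ge0 //.
  rewrite -real_normK ?num_real // -[c^+2]real_normK ?num_real //.
  rewrite lerXn2r ?nnegrE ?normr_ge0 //.
  by apply: le_trans (hc a) (ler_norm _).
apply: le_trans (avg_le h) _.
rewrite avgD avgD avgZ avgB avg_cst // avg_cst // avg_cst // subrr mulr0 addr0.
by rewrite expR_ge1Dx.
Qed.

Lemma card_gt0_ffun (A : finType) n : (0 < #|A|)%N -> (0 < #|{ffun 'I_n -> A}|)%N.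
Proof. by move=> hA; rewrite card_ffun expn_gt0 hA. Qed.

Lemma avg_prod (A : finType) n (g : 'I_n -> A -> R) :
  avg (fun S : {ffun 'I_n -> A} => \prod_i g i (S i)) = \prod_i avg (g i).
Proof.
rewrite /avg -bigA_distr_bigA /= card_ffun card_ord natrX.
rewrite prodf_div; congr (_ / _).
by rewrite prodr_const card_ord.
Qed.

Lemma avg_coord (A : finType) n (f : A -> R) (i : 'I_n) : (0 < #|A|)%N ->
  avg (fun S : {ffun 'I_n -> A} => f (S i)) = avg f.
Proof.
move=> hA.
pose g := fun j : 'I_n => if j == i then f else fun _ : A => 1.
have -> : (fun S : {ffun 'I_n -> A} => f (S i)) = (fun S => \prod_j g j (S j)).
  apply: funext => S; rewrite (bigD1 i) //= /g eqxx big1 ?mulr1 //.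
  by move=> j /negbTE ->.
rewrite avg_prod (bigD1 i) //= /g eqxx big1 ?mulr1 //.
by move=> j /negbTE ->; rewrite avg_cst.
Qed.

Definition fcons (A : finType) n (x : A) (g : {ffun 'I_n -> A}) : {ffun 'I_n.+1 -> A} :=
  [ffun i => if unlift ord0 i is Some j then g j else x].

Lemma avg_fcons (A : finType) n (F : {ffun 'I_n.+1 -> A} -> R) :
  avg F = avg (fun x => avg (fun g => F (fcons x g))).
Proof.
have hb : bijective (fun p : A * {ffun 'I_n -> A} => fcons p.1 p.2).
  exists (fun S : {ffun 'I_n.+1 -> A} => (S ord0, [ffun j => S (lift ord0 j)])).
    move=> [x g] /=; congr (_, _); first by rewrite /fcons ffunE unlift_none.
    by apply/ffunP => j; rewrite !ffunE liftK.
  move=> S; apply/ffunP => i; rewrite /fcons ffunE.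
  by case: (unliftP ord0 i) => [j ->|->]; rewrite ?ffunE.
rewrite /avg (reindex _ (onW_bij _ hb)) /=.
rewrite -mulr_suml pair_bigA /= -mulrA; congr (_ * _).
by rewrite !card_ffun !card_ord expnS natrM invfM mulrC.
Qed.

Lemma avg_norm_le (A : finType) (f : A -> R) c : (0 < #|A|)%N ->
  (forall a, `|f a| <= c) -> `|avg f| <= c.
Proof.
move=> hA h; rewrite ler_norml; apply/andP; split.
  rewrite -(avg_cst (- c) hA); apply: avg_le => a.
  by have := h a; rewrite ler_norml => /andP[].
rewrite -(avg_cst c hA); apply: avg_le => a.
by have := h a; rewrite ler_norml => /andP[].
Qed.

Definition upd (A : finType) n (S : {ffun 'I_n -> A}) (i : 'I_n) (x : A) :
  {ffun 'I_n -> A} := [ffun j => if j == i then x else S j].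

Lemma fcons_upd_tail (A : finType) n (x : A) g (j : 'I_n) y :
  fcons x (upd g j y) = upd (fcons x g) (lift ord0 j) y.
Proof.
apply/ffunP => i; rewrite /fcons /upd !ffunE.
case: (unliftP ord0 i) => [k ->|->]; rewrite ?ffunE.
  by rewrite (inj_eq (@lift_inj _ ord0)).
by rewrite (negbTE (neq_lift _ _)).
Qed.

Lemma fcons_upd_head (A : finType) n (x x' : A) (g : {ffun 'I_n -> A}) :
  fcons x' g = upd (fcons x g) ord0 x'.
Proof.
apply/ffunP => i; rewrite /fcons /upd !ffunE.
by case: (unliftP ord0 i) => [k ->|->]; rewrite ?ffunE ?eqxx.
Qed.

Lemma mcdiarmid (A : finType) n (G : {ffun 'I_n -> A} -> R) c lam :
  (0 < #|A|)%N -> 0 <= lam -> lam * c <= 1 ->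
  (forall S i x, `|G S - G (upd S i x)| <= c) ->
  avg (fun S => expR (lam * (G S - avg G))) <= expR (n%:R * (lam^+2 * c^+2)).
Proof.
elim: n G => [|n IH] G hA l0 lc hG.
  have hc : forall S, G S = avg G.
    move=> S; rewrite -(avg_cst (G S) (card_gt0_ffun 0 hA)); congr avg.
    by apply: funext => S'; congr G; apply/ffunP => -[].
  have -> : (fun S => expR (lam * (G S - avg G))) = (fun _ => 1).
    by apply: funext => S; rewrite -(hc S) subrr mulr0 expR0.
  by rewrite avg_cst ?card_gt0_ffun // mul0r expR0.
rewrite avg_fcons.
set H := fun x => avg (fun g => G (fcons x g)).
have eG : avg G = avg H by rewrite avg_fcons.
have hH : forall x, `|H x - avg H| <= c.
  move=> x.
  have -> : H x - avg H = avg (fun x' => H x - H x') by rewrite avgB avg_cst.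
  apply: avg_norm_le => // x'.
  rewrite /H -avgB; apply: avg_norm_le; first exact: card_gt0_ffun.
  by move=> g; rewrite (fcons_upd_head x x' g) hG.
have step : forall x, avg (fun g => expR (lam * (G (fcons x g) - avg G))) <=
    expR (lam * (H x - avg H)) * expR (n%:R * (lam^+2 * c^+2)).
  move=> x.
  have e : forall g, expR (lam * (G (fcons x g) - avg G)) =
      expR (lam * (H x - avg H)) * expR (lam * (G (fcons x g) - H x)).
    by move=> g; rewrite -expRD -mulrDr eG; congr (expR (lam * _)); ring.
  rewrite (funext e) avgZ ler_pM2l ?expR_gt0 //.
  apply: (IH (fun g => G (fcons x g))) => // g j y.
  by rewrite fcons_upd_tail; exact: hG.
apply: le_trans (avg_le step) _.
have -> : avg (fun x => expR (lam * (H x - avg H)) * expR (n%:R * (lam ^+ 2 * c ^+ 2))) =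
    expR (n%:R * (lam ^+ 2 * c ^+ 2)) * avg (fun x => expR (lam * (H x - avg H))).
  by rewrite -avgZ; congr avg; apply: funext => x; rewrite mulrC.
apply: le_trans (_ : expR (n%:R * (lam ^+ 2 * c ^+ 2)) * expR (lam^+2 * c^+2) <= _).
  by rewrite ler_pM2l ?expR_gt0 //; apply: avg_hoef.
by rewrite -expRD -nat1r mulrDl mul1r addrC.
Qed.
End Avg.

Section Contraction.
Variable R : realType.

Definition sg (b : bool) : R := if b then 1 else -1.

Lemma norm_sg b : `|sg b| = 1.
Proof. by case: b; rewrite /sg ?normrN normr1. Qed.

Lemma sg_neg b : sg (~~ b) = - sg b.
Proof. by case: b; rewrite /sg ?opprK. Qed.

Lemma supW_add_le (W : Type) (w0 : W) (F G : W -> R) C :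
  (forall w w', F w + G w' <= C) -> supW F + supW G <= C.
Proof.
move=> h.
have h1 : forall w', supW F <= C - G w'.
  by move=> w'; apply: (supW_le w0) => w; have := h w w'; lra.
have : supW G <= C - supW F.
  by apply: (supW_le w0) => w'; have := h1 w'; lra.
lra.
Qed.

Definition flip n (i0 : 'I_n) (s : {ffun 'I_n -> bool}) : {ffun 'I_n -> bool} :=
  [ffun i => if i == i0 then ~~ s i else s i].

Lemma flipK n (i0 : 'I_n) : involutive (flip i0).
Proof.
move=> s; apply/ffunP => i; rewrite /flip !ffunE.
by case: (i == i0) => //; rewrite negbK.
Qed.

Variables (W : Type) (w0 : W) (n : nat) (u : 'I_n -> W -> R) (phi : R -> R) (L : R).
Hypotheses (L0 : 0 <= L) (hu : forall i w, `|u i w| <= 1) (hphi : forall t, `|phi t| <= 1)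
  (hlip : forall a b, `|phi a - phi b| <= L * `|a - b|).

Definition Psi (j : nat) (s : {ffun 'I_n -> bool}) (w : W) : R :=
  \sum_i sg (s i) * (if (i < j)%N then L * u i w else phi (u i w)).

Lemma Psi_bound j s w : Psi j s w <= n%:R * (L + 1).
Proof.
rewrite /Psi; apply: le_trans (ler_norm _) _.
apply: le_trans (ler_norm_sum _ _ _) _.
rewrite mulr_natl -[in X in _ *+ X](card_ord n) -sumr_const; apply: ler_sum => i _.
rewrite normrM norm_sg mul1r; case: ifP => _.
  by rewrite normrM ger0_norm //; have := ler_wpM2l L0 (hu i w); have := L0; lra.
by have := hphi (u i w); have := L0; lra.
Qed.

Lemma Psi_split j s (i0 : 'I_n) w : Psi j s w =
  sg (s i0) * (if (i0 < j)%N then L * u i0 w else phi (u i0 w)) +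
  \sum_(i | i != i0) sg (s i) * (if (i < j)%N then L * u i w else phi (u i w)).
Proof. by rewrite /Psi (bigD1 i0). Qed.

Lemma Psi_step j (hj : (j < n)%N) :
  avg (fun s => supW (Psi j s)) <= avg (fun s => supW (Psi j.+1 s)).
Proof.
set i0 : 'I_n := Ordinal hj.
have hf : injective (flip i0) by apply: (can_inj (flipK i0)).
have half : forall F : {ffun 'I_n -> bool} -> R,
    avg F = avg (fun s => (F s + F (flip i0 s)) / 2).
  move=> F.
  have -> : (fun s => (F s + F (flip i0 s)) / 2) = (fun s => 2^-1 * (F s + F (flip i0 s))).
    by apply: funext => s; rewrite mulrC.
  rewrite avgZ avgD (avg_inj F hf); lra.
apply: le_trans (_ : avg (fun s => (supW (Psi j s) + supW (Psi j (flip i0 s))) / 2) <= _).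
  by rewrite -half.
rewrite [X in _ <= X]half; apply: avg_le => s; rewrite ler_pM2r //.
apply: (supW_add_le w0) => w w'.
have fl : flip i0 s i0 = ~~ s i0 by rewrite /flip ffunE eqxx.
have fo : forall i, i != i0 -> flip i0 s i = s i by move=> i /negbTE hi; rewrite /flip ffunE hi.
have lt0 : (i0 < j)%N = false by rewrite ltnn.
have lt1 : (i0 < j.+1)%N by rewrite ltnS.
have rest : forall (s' : {ffun 'I_n -> bool}) v, \sum_(i | i != i0) sg (s' i) * (if (i < j)%N then L * u i v else phi (u i v))
   = \sum_(i | i != i0) sg (s' i) * (if (i < j.+1)%N then L * u i v else phi (u i v)).
  move=> s' v; apply: eq_bigr => i hi; congr (_ * _).
  have : (nat_of_ord i != j) by apply: contra hi => /eqP h; apply/eqP/val_inj.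
  by rewrite ltnS [(i <= j)%N]leq_eqVlt => /negbTE ->.
have rf : forall v, \sum_(i | i != i0) sg (flip i0 s i) * (if (i < j.+1)%N then L * u i v else phi (u i v))
   = \sum_(i | i != i0) sg (s i) * (if (i < j.+1)%N then L * u i v else phi (u i v)).
  by move=> v; apply: eq_bigr => i hi; rewrite fo.
rewrite !(Psi_split _ _ i0) lt0 !rest !rf fl sg_neg.
have key : forall v, sg (s i0) * (L * u i0 v) + \sum_(i | i != i0) sg (s i) * (if (i < j.+1)%N then L * u i v else phi (u i v)) <= supW (Psi j.+1 s).
  move=> v; apply: le_trans (supW_ub v (Psi_bound j.+1 s)).
  by rewrite (Psi_split _ _ i0) lt1.
have key' : forall v, - sg (s i0) * (L * u i0 v) + \sum_(i | i != i0) sg (s i) * (if (i < j.+1)%N then L * u i v else phi (u i v)) <= supW (Psi j.+1 (flip i0 s)).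
  move=> v; apply: le_trans (supW_ub v (Psi_bound j.+1 (flip i0 s))).
  by rewrite (Psi_split _ _ i0) lt1 fl sg_neg rf.
have hl := hlip (u i0 w) (u i0 w').
have n1 := ler_norm (phi (u i0 w) - phi (u i0 w')).
have n2 := ler_norm (phi (u i0 w') - phi (u i0 w)).
rewrite distrC in n2.
have kw := key w; have kw' := key w'; have k'w := key' w; have k'w' := key' w'.
have hs : sg (s i0) = 1 \/ sg (s i0) = -1 by rewrite /sg; case: ifP; [left|right].
case: (lerP 0 (u i0 w - u i0 w')) => hd.
  rewrite (ger0_norm hd) mulrBr in hl.
  by case: hs => hs; rewrite hs ?mul1r ?mulN1r ?opprK in kw kw' k'w k'w' *; lra.
rewrite (ltr0_norm hd) mulrN mulrBr in hl.
by case: hs => hs; rewrite hs ?mul1r ?mulN1r ?opprK in kw kw' k'w k'w' *; lra.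
Qed.

Lemma contraction :
  avg (fun s : {ffun 'I_n -> bool} => supW (fun w => \sum_i sg (s i) * phi (u i w))) <=
  avg (fun s : {ffun 'I_n -> bool} => supW (fun w => \sum_i sg (s i) * (L * u i w))).
Proof.
have e0 : forall s : {ffun 'I_n -> bool}, (fun w => \sum_i sg (s i) * phi (u i w)) = Psi 0 s.
  by move=> s; apply: funext => w; rewrite /Psi.
have en : forall s : {ffun 'I_n -> bool}, (fun w => \sum_i sg (s i) * (L * u i w)) = Psi n s.
  by move=> s; apply: funext => w; rewrite /Psi; apply: eq_bigr => i _; rewrite ltn_ord.
have -> : (fun s : {ffun 'I_n -> bool} => supW (fun w => \sum_i sg (s i) * phi (u i w))) = (fun s => supW (Psi 0 s)).
  by apply: funext => s; rewrite e0.
have -> : (fun s : {ffun 'I_n -> bool} => supW (fun w => \sum_i sg (s i) * (L * u i w))) = (fun s => supW (Psi n s)).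
  by apply: funext => s; rewrite en.
suff : forall j, (j <= n)%N -> avg (fun s => supW (Psi 0 s)) <= avg (fun s => supW (Psi j s)).
  by apply.
elim => [|j IH] hj //.
apply: le_trans (IH (ltnW hj)) _; exact: Psi_step.
Qed.
End Contraction.

Section Massart.
Variable R : realType.
Variables (n m : nat) (a : 'I_m -> 'I_n -> R) (lam : R).
Hypotheses (m0 : (0 < m)%N) (l0 : 0 < lam) (l1 : lam <= 1) (ha : forall j i, `|a j i| <= 1).

Definition X (j : 'I_m) (s : {ffun 'I_n -> bool}) : R := \sum_i sg R (s i) * a j i.
Definition Z (s : {ffun 'I_n -> bool}) : R :=
  \sum_j (expR (lam * X j s) + expR (- (lam * X j s))).

Lemma Z_ge j s : expR (lam * X j s) + expR (- (lam * X j s)) <= Z s.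
Proof.
rewrite /Z (bigD1 j) //= lerDl; apply: sumr_ge0 => i _.
by rewrite addr_ge0 ?expR_ge0.
Qed.

Lemma Z_gt0 s : 0 < Z s.
Proof.
apply: lt_le_trans (Z_ge (Ordinal m0) s).
by rewrite ltr_wpDr ?expR_ge0 ?expR_gt0.
Qed.

Lemma X_le_lnZ j s : lam * `|X j s| <= ln (Z s).
Proof.
rewrite -ler_expR lnK ?posrE ?Z_gt0 //; apply: le_trans (Z_ge j s).
have [h|h] := leP 0 (X j s).
  by rewrite ger0_norm // lerDl expR_ge0.
by rewrite ltr0_norm // mulrN lerDr expR_ge0.
Qed.

Lemma avg_sum (A : finType) (I : finType) (f : I -> A -> R) :
  avg (fun x => \sum_i f i x) = \sum_i avg (f i).
Proof. by rewrite /avg exchange_big /= mulr_suml. Qed.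

Lemma avg_expX (sgn : R) j : `|sgn| = 1 ->
  avg (fun s => expR (sgn * (lam * X j s))) <= expR (n%:R * lam^+2).
Proof.
move=> hs.
have -> : (fun s => expR (sgn * (lam * X j s))) =
    (fun s : {ffun 'I_n -> bool} => \prod_i expR (sgn * lam * sg R (s i) * a j i)).
  apply: funext => s; rewrite /X -expR_sum; congr expR.
  by rewrite mulr_sumr mulr_sumr; apply: eq_bigr => i _; rewrite !mulrA.
rewrite (avg_prod (fun i b => expR (sgn * lam * sg R b * a j i))).
rewrite expRM_natl -[in X in _ <= _ ^+ X](card_ord n) -prodr_const.
apply: ler_prod => i _; apply/andP; split.
  by rewrite /avg mulr_ge0 // sumr_ge0 // => b _; rewrite expR_ge0.
rewrite /avg big_bool card_bool /= /sg !mulr1 !mulrN1.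
have hy : `|sgn * lam * a j i| <= 1.
  rewrite !normrM hs mul1r ger0_norm ?(ltW l0) //.
  by have := ler_wpM2l (ltW l0) (ha j i); rewrite mulr1 => h; apply: le_trans h l1.
have e1 := expR_quad hy.
have hy' : `|- (sgn * lam * a j i)| <= 1 by rewrite normrN.
have e2 := expR_quad hy'.
have hsq : (sgn * lam * a j i)^+2 <= lam^+2.
  rewrite -real_normK ?num_real // -[lam^+2]real_normK ?num_real //.
  rewrite lerXn2r ?nnegrE ?normr_ge0 // !normrM hs mul1r.
  by rewrite -[X in _ <= X]mulr1 ler_wpM2l ?normr_ge0.
have := expR_ge1Dx (lam^+2).
rewrite sqrrN in e2.
rewrite mulNr; lra.
Qed.

Lemma avg_lnZ : avg (fun s => ln (Z s)) <= ln (2 * m%:R) + n%:R * lam^+2.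
Proof.
have hA : (0 < #|{ffun 'I_n -> bool}|)%N by apply: card_gt0_ffun; rewrite card_bool.
have hZ : avg Z <= 2 * m%:R * expR (n%:R * lam^+2).
  rewrite /Z avg_sum.
  apply: le_trans (_ : \sum_(j < m) (2 * expR (n%:R * lam^+2)) <= _).
    apply: ler_sum => j _; rewrite avgD.
    have -> : (fun s => expR (lam * X j s)) = (fun s => expR (1 * (lam * X j s))).
      by apply: funext => s; rewrite mul1r.
    have -> : (fun s => expR (- (lam * X j s))) = (fun s => expR (-1 * (lam * X j s))).
      by apply: funext => s; rewrite mulN1r.
    have := avg_expX j (normr1 R); have := avg_expX j (normrN1 R); lra.
  by rewrite sumr_const card_ord -[_ *+ m]mulr_natr mulrAC.
have hj : expR (avg (fun s => ln (Z s))) <= avg Z.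
  apply: le_trans (jensen_exp _ hA) _.
  by apply: avg_le => s; rewrite lnK ?posrE ?Z_gt0.
have hm : 0 < 2 * m%:R :> R by rewrite mulr_gt0 // ltr0n.
have hE : 0 < 2 * m%:R * expR (n%:R * lam^+2) by rewrite mulr_gt0 ?expR_gt0.
rewrite -[X in X <= _]expRK -(expRK (n%:R * lam^+2)) -lnM ?posrE ?expR_gt0 //.
rewrite ler_ln ?posrE ?expR_gt0 //.
exact: le_trans hj hZ.
Qed.
End Massart.
Section Clamp.
Variable R : realType.
Definition clamp (z : R) : R := if z <= 0 then 0 else if 1 <= z then 1 else z.

Lemma clamp_ge0 z : 0 <= clamp z.
Proof. rewrite /clamp; case: ifP => h1 //; case: ifP => h2 //; move/negbT: h1; rewrite -ltNge; lra. Qed.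

Lemma clamp_le1 z : clamp z <= 1.
Proof. rewrite /clamp; case: ifP => h1 //; case: ifP => h2 //; move/negbT: h2; rewrite -ltNge; lra. Qed.

Lemma clamp_lip x y : `|clamp x - clamp y| <= `|x - y|.
Proof.
rewrite /clamp.
case: (lerP x 0) => hx; case: (lerP 1 x) => hx1; case: (lerP y 0) => hy; case: (lerP 1 y) => hy1;
 try lra;
 case: (lerP 0 (x - y)) => hd;
 rewrite ?(ger0_norm hd) ?(ltr0_norm hd);
 first [ rewrite ger0_norm; lra | rewrite ler0_norm; lra | rewrite normr0; lra | lra ].
Qed.
End Clamp.

Section Main.
Variables (R : realType) (d n k : nat) (wstar : 'I_d -> R).
Hypotheses (k0 : (0 < k)%N) (n0 : (0 < n)%N).

Definition uu (w : 'I_d -> R) (x : cube d) : R := ystar wstar x * dot w x / l1norm w.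
Definition phi (t : R) : R := clamp (1 - k%:R * t).
Definition emp (S : sample d n) (w : 'I_d -> R) : R := n%:R^-1 * \sum_i phi (uu w (S i)).
Definition mu (w : 'I_d -> R) : R := avg (fun x : cube d => phi (uu w x)).
Definition GG (S : sample d n) : R := supW (fun w => mu w - emp S w).

Lemma cardT_gt0 : (0 < #|{: cube d}|)%N.
Proof. by rewrite card_ffun expn_gt0 card_bool. Qed.

Lemma l1norm_ge0 (w : 'I_d -> R) : 0 <= l1norm w.
Proof. by rewrite /l1norm sumr_ge0. Qed.

Lemma dot_le (w : 'I_d -> R) x : `|dot w x| <= l1norm w.
Proof.
rewrite /dot /l1norm; apply: le_trans (ler_norm_sum _ _ _) _.
apply: ler_sum => i _; rewrite normrM.
by case: (x i); rewrite /sgnb ?normrN normr1 mulr1.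
Qed.

Lemma ystar_le x : `|ystar wstar x| <= 1.
Proof. by rewrite /ystar normr_sg; case: (_ != 0). Qed.

Lemma uu_bound w x : `|uu w x| <= 1.
Proof.
rewrite /uu; have [h|h] := eqVneq (l1norm w) 0.
  by rewrite h invr0 mulr0 normr0.
have hp : 0 < l1norm w by rewrite lt0r h l1norm_ge0.
rewrite normrM normfV (gtr0_norm hp) ler_pdivrMr // mul1r normrM.
rewrite -[X in _ <= X]mul1r; apply: ler_pM => //; [exact: ystar_le | exact: dot_le].
Qed.

Lemma phi_bound t : `|phi t| <= 1.
Proof. by rewrite /phi ger0_norm ?clamp_ge0 ?clamp_le1. Qed.

Lemma phi_ge0 t : 0 <= phi t.
Proof. exact: clamp_ge0. Qed.

Lemma phi_lip a b : `|phi a - phi b| <= k%:R * `|a - b|.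
Proof.
apply: le_trans (clamp_lip _ _) _.
have -> : 1 - k%:R * a - (1 - k%:R * b) = k%:R * (b - a) by ring.
by rewrite normrM ger0_norm // distrC.
Qed.

Lemma phi_le0 t : t <= 0 -> phi t = 1.
Proof.
move=> h; rewrite /phi /clamp.
have : 0 <= k%:R * t * (-1) by rewrite mulrN1 oppr_ge0 mulr_ge0_le0.
rewrite mulrN1 => h'.
have -> : (1 - k%:R * t <= 0) = false by apply/negbTE; rewrite -ltNge; lra.
by have -> : (1 <= 1 - k%:R * t) = true by apply/idP; lra.
Qed.

Lemma phi_margin t : k%:R^-1 <= t -> phi t = 0.
Proof.
move=> h; rewrite /phi /clamp.
have kp : 0 < k%:R :> R by rewrite ltr0n.
have : k%:R * k%:R^-1 <= k%:R * t :> R by rewrite ler_wpM2l // ltW.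
rewrite mulfV ?lt0r_neq0 //.
by move=> h1; have -> : (1 - k%:R * t <= 0) = true by apply/idP; lra.
Qed.

Lemma phi_le1 t : phi t <= 1.
Proof. exact: clamp_le1. Qed.

Lemma emp_ge0 S w : 0 <= emp S w.
Proof. by rewrite /emp mulr_ge0 ?invr_ge0 ?ler0n ?sumr_ge0 // => i _; exact: phi_ge0. Qed.

Lemma mu_le1 w : mu w <= 1.
Proof.
rewrite /mu -(avg_cst 1 cardT_gt0); apply: avg_le => x; exact: phi_le1.
Qed.

Lemma GG_arg_le S w : mu w - emp S w <= 1.
Proof. have := mu_le1 w; have := emp_ge0 S w; lra. Qed.

Lemma emp_diff S i x w : `|emp S w - emp (upd S i x) w| <= n%:R^-1.
Proof.
rewrite /emp -mulrBr normrM ger0_norm ?invr_ge0 ?ler0n //.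
rewrite -[X in _ <= X]mulr1 ler_wpM2l ?invr_ge0 ?ler0n //.
rewrite (bigD1 i) //= [X in _ - X](bigD1 i) //=.
have -> : \sum_(j | j != i) phi (uu w (upd S i x j)) = \sum_(j | j != i) phi (uu w (S j)).
  by apply: eq_bigr => j /negbTE hj; rewrite /upd ffunE hj.
rewrite /upd ffunE eqxx.
set s := \sum_(j | j != i) _.
have := phi_ge0 (uu w (S i)); have := phi_le1 (uu w (S i)).
have := phi_ge0 (uu w x); have := phi_le1 (uu w x).
move=> h1 h2 h3 h4; rewrite ler_norml; apply/andP; split; lra.
Qed.

Lemma GG_le S S' : (forall w, emp S' w - emp S w <= n%:R^-1) -> GG S <= GG S' + n%:R^-1.
Proof.
move=> h; apply: (supW_le (fun _ => 0)) => w.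
have := supW_ub w (GG_arg_le S'); rewrite -/(GG S') => h1.
have := h w; lra.
Qed.

Lemma GG_bd S i x : `|GG S - GG (upd S i x)| <= n%:R^-1.
Proof.
rewrite ler_norml; apply/andP; split.
  suff : GG (upd S i x) <= GG S + n%:R^-1 by lra.
  apply: GG_le => w; have := emp_diff S i x w; rewrite ler_norml => /andP[]; lra.
suff : GG S <= GG (upd S i x) + n%:R^-1 by lra.
apply: GG_le => w; have := emp_diff S i x w; rewrite ler_norml => /andP[]; lra.
Qed.

Lemma ssum_bound (s : {ffun 'I_n -> bool}) (f : 'I_n -> R) c :
  (forall i, `|f i| <= c) -> n%:R^-1 * \sum_i sg R (s i) * f i <= c.
Proof.
move=> h.
have np : 0 < n%:R :> R by rewrite ltr0n.
rewrite mulrC ler_pdivrMr // mulrC; apply: le_trans (ler_norm _) _.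
apply: le_trans (ler_norm_sum _ _ _) _.
rewrite mulr_natl -[in X in _ *+ X](card_ord n) -sumr_const; apply: ler_sum => i _.
by rewrite normrM norm_sg mul1r.
Qed.

Lemma mu_avg w : mu w = avg (fun S : sample d n => emp S w).
Proof.
rewrite /emp avgZ avg_sum.
have -> : \sum_(i < n) avg (fun S : sample d n => phi (uu w (S i))) = \sum_(i < n) mu w.
  by apply: eq_bigr => i _; rewrite /mu; exact: (avg_coord (fun x : cube d => phi (uu w x)) i cardT_gt0).
by rewrite sumr_const card_ord -[mu w *+ n]mulr_natl mulrA mulVf ?mul1r // pnatr_eq0 -lt0n.
Qed.

Lemma avg_pair (A B : finType) (f : A -> B -> R) :
  avg (fun a => avg (fun b => f a b)) = avg (fun p : A * B => f p.1 p.2).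
Proof.
rewrite /avg -mulr_suml pair_bigA /= -mulrA; congr (_ * _).
by rewrite card_prod natrM invfM mulrC.
Qed.

Definition Rad (S : sample d n) : R :=
  avg (fun s : {ffun 'I_n -> bool} =>
    supW (fun w => n%:R^-1 * \sum_i sg R (s i) * phi (uu w (S i)))).

Definition swp (s : {ffun 'I_n -> bool}) (p : sample d n * sample d n) : sample d n * sample d n :=
  ([ffun i => if s i then p.1 i else p.2 i], [ffun i => if s i then p.2 i else p.1 i]).

Lemma swpK s : involutive (swp s).
Proof.
move=> [S S']; rewrite /swp /=; congr (_, _); apply/ffunP => i; rewrite !ffunE;
by case: (s i).
Qed.

Definition negf (s : {ffun 'I_n -> bool}) : {ffun 'I_n -> bool} := [ffun i => ~~ s i].
Lemma negfK : involutive negf.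
Proof. by move=> s; apply/ffunP => i; rewrite !ffunE negbK. Qed.

Lemma sym : avg GG <= 2 * avg Rad.
Proof.
pose D (p : sample d n * sample d n) (w : 'I_d -> R) :=
  n%:R^-1 * \sum_i (phi (uu w (p.2 i)) - phi (uu w (p.1 i))).
have hD : forall p w, D p w <= 1.
  move=> p w; rewrite /D.
  have -> : \sum_i (phi (uu w (p.2 i)) - phi (uu w (p.1 i))) =
     \sum_i sg R (negf (negf [ffun=> true]) i) * (phi (uu w (p.2 i)) - phi (uu w (p.1 i))).
    by apply: eq_bigr => i _; rewrite !ffunE /= mul1r.
  apply: ssum_bound => i.
  have := phi_ge0 (uu w (p.2 i)); have := phi_le1 (uu w (p.2 i)).
  have := phi_ge0 (uu w (p.1 i)); have := phi_le1 (uu w (p.1 i)).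
  move=> h1 h2 h3 h4; rewrite ler_norml; apply/andP; split; lra.
have step1 : forall S, GG S <= avg (fun S' => supW (D (S, S'))).
  move=> S; apply: (supW_le (fun _ => 0)) => w.
  rewrite mu_avg -(avg_cst (emp S w) (card_gt0_ffun n cardT_gt0)) -avgB.
  apply: avg_le => S'; apply: le_trans (supW_ub w (hD (S, S'))).
  by rewrite /D /emp -mulrBr sumrB.
pose Ds (s : {ffun 'I_n -> bool}) (p : sample d n * sample d n) (w : 'I_d -> R) :=
  n%:R^-1 * \sum_i sg R (s i) * (phi (uu w (p.2 i)) - phi (uu w (p.1 i))).
have hsw : forall s p, D (swp s p) = Ds s p.
  move=> s p; apply: funext => w; rewrite /D /Ds; congr (_ * _); apply: eq_bigr => i _.
  by rewrite /swp /= !ffunE; case: (s i); rewrite /sg ?mul1r ?mulN1r ?opprB.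
have hB : (0 < #|{ffun 'I_n -> bool}|)%N by apply: card_gt0_ffun; rewrite card_bool.
have e1 : avg (fun p => supW (D p)) =
    avg (fun s : {ffun 'I_n -> bool} => avg (fun p => supW (Ds s p))).
  rewrite -[LHS](avg_cst _ hB); congr avg.
  apply: funext => s; rewrite -(avg_inj _ (can_inj (swpK s))).
  by congr avg; apply: funext => p; rewrite hsw.
pose F (s : {ffun 'I_n -> bool}) (S : sample d n) :=
  supW (fun w => n%:R^-1 * \sum_i sg R (s i) * phi (uu w (S i))).
have hF : forall s p, supW (Ds s p) <= F s p.2 + F (negf s) p.1.
  move=> s p; apply: (supW_le (fun _ => 0)) => w.
  have b1 : forall (s' : {ffun 'I_n -> bool}) S v,
      n%:R^-1 * \sum_i sg R (s' i) * phi (uu v (S i)) <= 1.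
    by move=> s' S v; apply: ssum_bound => i; exact: phi_bound.
  have u1 := supW_ub w (b1 s p.2).
  have u2 := supW_ub w (b1 (negf s) p.1).
  suff -> : Ds s p w = n%:R^-1 * \sum_i sg R (s i) * phi (uu w (p.2 i)) +
     n%:R^-1 * \sum_i sg R (negf s i) * phi (uu w (p.1 i)).
    by rewrite /F; apply: lerD.
  rewrite /Ds -mulrDr -big_split /=; congr (_ * _); apply: eq_bigr => i _.
  by rewrite /negf ffunE sg_neg; ring.
have step2 : avg GG <= avg (fun p => supW (D p)).
  rewrite -(avg_pair (fun S S' => supW (D (S, S')))); apply: avg_le; exact: step1.
apply: le_trans step2 _; rewrite e1.
apply: le_trans (_ : avg (fun s => avg (fun p : sample d n * sample d n => F s p.2 + F (negf s) p.1)) <= _).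
  by apply: avg_le => s; apply: avg_le => p; exact: hF.
under eq_fun do rewrite avgD.
rewrite avgD (avg_exchange (fun s p => F s p.2)) (avg_exchange (fun s p => F (negf s) p.1)).
have -> : (fun p : sample d n * sample d n => avg (fun s => F (negf s) p.1)) =
    (fun p => Rad p.1).
  by apply: funext => p; rewrite /Rad (avg_inj (fun s => F s p.1) (can_inj negfK)).
have -> : (fun p : sample d n * sample d n => avg (fun s => F s p.2)) =
    (fun p => Rad p.2) by [].
rewrite -(avg_pair (fun S S' => Rad S)) -(avg_pair (fun S S' => Rad S')).
rewrite avg_cst ?card_gt0_ffun ?cardT_gt0 //.
have e : (fun a : sample d n => avg (fun _ : sample d n => Rad a)) = Rad.
  by apply: funext => a; rewrite avg_cst // card_gt0_ffun // cardT_gt0.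
rewrite e.
have -> : avg (fun a : sample d n => Rad a) = avg Rad by [].
lra. all: by rewrite card_bool.
Qed.

Definition aa (S : sample d n) (j : 'I_d) (i : 'I_n) : R := ystar wstar (S i) * sgnb R (S i j).

Lemma aa_bound (S : sample d n) j i : `|aa S j i| <= 1.
Proof.
rewrite /aa normrM; apply: le_trans (_ : `|ystar wstar (S i)| * 1 <= 1).
  by rewrite ler_wpM2l // /sgnb; case: (S i j); rewrite ?normrN normr1.
by rewrite mulr1 ystar_le.
Qed.

Lemma sum_rewrite (S : sample d n) (s : {ffun 'I_n -> bool}) w :
  \sum_i sg R (s i) * (k%:R * uu w (S i)) =
  k%:R / l1norm w * \sum_j w j * X (aa S) j s.
Proof.
have -> : \sum_i sg R (s i) * (k%:R * uu w (S i)) =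
    \sum_i \sum_j (sg R (s i) * k%:R * ystar wstar (S i) / l1norm w) * (w j * sgnb R (S i j)).
  by apply: eq_bigr => i _; rewrite -mulr_sumr /uu -/(dot w (S i)); ring.
rewrite exchange_big /= mulr_sumr; apply: eq_bigr => j _.
rewrite /X mulr_sumr mulr_sumr; apply: eq_bigr => i _.
rewrite /aa; ring.
Qed.

Lemma Rad_bound (S : sample d n) lam : (0 < d)%N -> 0 < lam -> lam <= 1 ->
  Rad S <= n%:R^-1 * (k%:R / lam * (ln (2 * d%:R) + n%:R * lam^+2)).
Proof.
move=> d0 l0 l1.
have np : 0 < n%:R :> R by rewrite ltr0n.
have kp : 0 <= k%:R :> R by rewrite ler0n.
pose w0 : 'I_d -> R := fun _ => 0.
have b1 : forall (s : {ffun 'I_n -> bool}) v,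
    \sum_i sg R (s i) * phi (uu v (S i)) <= n%:R.
  move=> s v; have := ssum_bound s (c := 1) (fun i => phi_bound (uu v (S i))).
  by rewrite mulrC ler_pdivrMr // mul1r.
have step1 : forall s : {ffun 'I_n -> bool},
    supW (fun w => n%:R^-1 * \sum_i sg R (s i) * phi (uu w (S i))) <=
    n%:R^-1 * supW (fun w => \sum_i sg R (s i) * phi (uu w (S i))).
  move=> s; apply: (supW_le w0) => w.
  by rewrite ler_wpM2l ?invr_ge0 ?(ltW np) // (supW_ub w (b1 s)).
have hlnZ : forall s, 0 <= ln (Z (aa S) lam s).
  move=> s; apply: le_trans (X_le_lnZ (aa S) lam d0 (Ordinal d0) s).
  by rewrite mulr_ge0 ?(ltW l0).
have step2 : forall s : {ffun 'I_n -> bool},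
    supW (fun w => \sum_i sg R (s i) * (k%:R * uu w (S i))) <=
    k%:R / lam * ln (Z (aa S) lam s).
  move=> s; apply: (supW_le w0) => w; rewrite sum_rewrite.
  have [h|h] := eqVneq (l1norm w) 0.
    by rewrite h invr0 mulr0 mul0r mulr_ge0 ?divr_ge0 ?(ltW l0).
  have hp : 0 < l1norm w by rewrite lt0r h l1norm_ge0.
  have hX : forall j, `|X (aa S) j s| <= ln (Z (aa S) lam s) / lam.
    by move=> j; rewrite ler_pdivlMr // mulrC X_le_lnZ.
  have : \sum_j w j * X (aa S) j s <= l1norm w * (ln (Z (aa S) lam s) / lam).
    apply: le_trans (ler_norm _) _; apply: le_trans (ler_norm_sum _ _ _) _.
    rewrite /l1norm mulr_suml; apply: ler_sum => j _; rewrite normrM.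
    by rewrite ler_wpM2l ?normr_ge0.
  move=> hs.
  have h2 : (l1norm w)^-1 * \sum_j w j * X (aa S) j s <= ln (Z (aa S) lam s) / lam.
    by rewrite -(ler_pM2l hp) mulrA mulfV ?mul1r ?lt0r_neq0.
  rewrite -mulrA; apply: le_trans (ler_wpM2l kp h2) _.
  have -> : k%:R * (ln (Z (aa S) lam s) / lam) = k%:R / lam * ln (Z (aa S) lam s) by ring.
  by [].
rewrite /Rad; apply: le_trans (avg_le step1) _; rewrite avgZ ler_wpM2l ?invr_ge0 ?(ltW np) //.
apply: le_trans (contraction w0 (u := fun i w => uu w (S i)) kp (fun i w => uu_bound w (S i)) phi_bound phi_lip) _.
apply: le_trans (avg_le step2) _; rewrite avgZ ler_wpM2l ?divr_ge0 ?(ltW l0) //.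
apply: avg_lnZ => //; exact: aa_bound.
Qed.

Section Margin.
Hypotheses (kd : (k <= d)%N) (kodd : odd k)
  (hw1 : forall i : 'I_d, (i < k)%N -> wstar i = 1 \/ wstar i = -1)
  (hw0 : forall i : 'I_d, (k <= i)%N -> wstar i = 0).

Lemma sum_ind : \sum_(i < d) ((i < k)%N)%:R = k%:R :> R.
Proof.
rewrite -(big_mkord xpredT (fun i => ((i < k)%N)%:R)) (big_cat_nat _ (n := k)) //=.
have h1 : \sum_(k <= i < d) ((i < k)%N)%:R = 0 :> R.
  rewrite big_nat_cond big1 // => i /andP[/andP[hi _] _].
  by rewrite ltnNge hi.
have h2 : \sum_(0 <= i < k) ((i < k)%N)%:R = \sum_(0 <= i < k) (1 : R).
  rewrite big_nat_cond [RHS]big_nat_cond; apply: eq_bigr => i /andP[/andP[_ ->] _].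
  by [].
by rewrite h1 h2 addr0 sumr_const_nat subn0.
Qed.

Lemma l1norm_wstar : l1norm wstar = k%:R.
Proof.
rewrite -sum_ind /l1norm; apply: eq_bigr => i _.
case: (ltnP i k) => h.
  by case: (hw1 h) => ->; rewrite ?normrN normr1.
by rewrite hw0 // normr0.
Qed.

Lemma dot_wstar_ge1 x : 1 <= `|dot wstar x|.
Proof.
pose c (i : 'I_d) := ((i < k)%N && (wstar i * sgnb R (x i) == 1)).
have e : forall i : 'I_d, wstar i * sgnb R (x i) = 2 * (c i)%:R - ((i < k)%N)%:R.
  have m1 : (-1 == 1 :> R) = false by apply/negbTE/eqP => h'; lra.
  move=> i; rewrite /c; case: (ltnP i k) => h /=.
    by case: (hw1 h) => ->; case: (x i); rewrite /sgnb ?mulr1 ?mulrN1 ?opprK ?eqxx ?m1 /=; lra.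
  by rewrite hw0 // mul0r /= mulr0 subrr.
have -> : dot wstar x = 2 * (\sum_i (c i : nat))%:R - k%:R.
  rewrite /dot (eq_bigr _ (fun i _ => e i)) sumrB -sum_ind -mulr_sumr natr_sum.
  by [].
set N := (\sum_i (c i : nat))%N.
have hne : (2 * N)%N != k.
  by apply/eqP => h; move: kodd; rewrite -h mul2n odd_double.
have -> : 2 * N%:R = (2 * N)%N%:R :> R by rewrite natrM.
case: (ltngtP (2 * N) k) => h.
- have : ((2 * N).+1)%:R <= k%:R :> R by rewrite ler_nat.
  rewrite -natr1 => h'; rewrite ler0_norm; lra.
- have : (k.+1)%:R <= (2 * N)%:R :> R by rewrite ler_nat.
  rewrite -natr1 => h'; rewrite ger0_norm; lra.
- by move: hne; rewrite h eqxx.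
Qed.


Lemma margin_of_max (S : sample d n) w : max_l1_margin wstar S w ->
  forall i, k%:R^-1 <= uu w (S i).
Proof.
move=> [_ hmax] i.
have kd0 : (0 < d)%N by apply: leq_trans k0 kd.
have nz : exists j, wstar j != 0.
  exists (Ordinal kd0); case: (hw1 (k0 : (Ordinal kd0 < k)%N)) => ->.
    exact: oner_neq0.
  by rewrite oppr_eq0 oner_neq0.
have kp : 0 < k%:R :> R by rewrite ltr0n.
have g1 : ((k%:R^-1)%:E <= gamma1 wstar S wstar)%E.
  apply/bigmin_geP; split; first exact: leey.
  move=> j _; rewrite lee_fin l1norm_wstar /ystar -normrEsg.
  by rewrite -[X in X <= _]mul1r ler_wpM2r ?invr_ge0 ?ler0n // dot_wstar_ge1.
have := le_trans g1 (hmax _ nz) => /bigmin_geP [_ /(_ i isT)].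
by rewrite lee_fin.
Qed.
End Margin.

Lemma test_error_le_mu w : test_error wstar w <= mu w.
Proof.
rewrite /test_error /mu /avg -sum1_card natr_sum big_mkcond /=.
rewrite ler_wpM2r ?invr_ge0 ?ler0n //; apply: ler_sum => x _.
rewrite inE; case: ifP => h; last exact: phi_ge0.
rewrite phi_le0 //= /uu mulr_le0_ge0 // ?invr_ge0 ?l1norm_ge0 //.
Qed.

Lemma test_error_le1 w : test_error wstar w <= 1.
Proof.
rewrite /test_error ler_pdivrMr ?mul1r ?ltr0n ?cardT_gt0 // ler_nat.
exact: max_card.
Qed.

Lemma test_le_GG (S : sample d n) w : (forall i, k%:R^-1 <= uu w (S i)) ->
  test_error wstar w <= GG S.
Proof.
move=> hm.
have e0 : emp S w = 0.
  by rewrite /emp big1 ?mulr0 // => i _; rewrite phi_margin.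
apply: le_trans (test_error_le_mu w) _.
have := supW_ub w (GG_arg_le S); rewrite -/(GG S) e0 subr0; exact.
Qed.
End Main.

Local Close Scope classical_set_scope.
Local Open Scope ring_scope.

Lemma tail_bound (R : realType) (A : finType) (G : A -> R) (t lam : R) :
  (0 < #|A|)%N -> 0 <= lam ->
  #|[set x | t <= G x]|%:R / #|A|%:R <= expR (- (lam * t)) * avg (fun x => expR (lam * G x)).
Proof.
move=> hA l0; rewrite -avgZ /avg -sum1_card natr_sum big_mkcond /=.
rewrite ler_wpM2r ?invr_ge0 ?ler0n //; apply: ler_sum => x _.
rewrite inE; case: ifP => h; last by rewrite mulr_ge0 ?expR_ge0.
rewrite -expRD -[1]expR0 ler_expR addrC -mulrBr mulr_ge0 //.
by rewrite subr_ge0.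
Qed.

Theorem theoremE3 (R : realType) (d n k : nat) (wstar : 'I_d -> R) (delta : R) :
  (0 < k)%N -> odd k -> (k <= d)%N -> (0 < n)%N ->
  (forall i : 'I_d, (i < k)%N -> wstar i = 1 \/ wstar i = -1) ->
  (forall i : 'I_d, (k <= i)%N -> wstar i = 0) ->
  0 < delta < 1 ->
  1 - delta <=
  @probS R d n (fun S : sample d n =>
    forall w : 'I_d -> R, max_l1_margin wstar S w ->
      test_error wstar w <=
        4 * k%:R * Num.sqrt (2 * ln (2 * d%:R) / n%:R)
        + 3 * Num.sqrt (ln (2 / delta) / (2 * n%:R))).
Proof.
move=> k0 kodd kd n0 hw1 hw0 /andP[dl0 dl1].
set a := 4 * k%:R * Num.sqrt (2 * ln (2 * d%:R) / n%:R).
set b := 3 * Num.sqrt (ln (2 / delta) / (2 * n%:R)).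
set E := fun S : sample d n => _.
have hN : (0 < #|{: sample d n}|)%N by apply: card_gt0_ffun; exact: cardT_gt0.
have Nr : 0 < #|{: sample d n}|%:R :> R by rewrite ltr0n.
have kd0 : (0 < d)%N by apply: leq_trans k0 kd.
have np : 0 < n%:R :> R by rewrite ltr0n.
have kr : 1 <= k%:R :> R by rewrite ler1n.
have ln2d : 0 < ln (2 * d%:R) :> R.
  apply: ln_gt0; have : 1 <= d%:R :> R by rewrite ler1n.
  lra.
have a0 : 0 <= a by rewrite /a mulr_ge0 ?sqrtr_ge0 // mulr_ge0 // ler0n.
have b0 : 0 <= b by rewrite /b mulr_ge0 ?sqrtr_ge0.
case: (lerP 1 (a + b)) => hB.
  rewrite /probS.
  have -> : [set S : sample d n | `[< E S >]] = [set: sample d n].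
    apply/setP => S; rewrite !inE; apply/asboolP => w _.
    exact: le_trans (test_error_le1 _ _) hB.
  by rewrite cardsT divff ?lt0r_neq0 //; lra.
pose lam : R := Num.sqrt (ln (2 * d%:R) / n%:R).
have q0 : 0 <= ln (2 * d%:R) / n%:R :> R by apply: divr_ge0; [exact: ltW | exact: ler0n].
have lam2 : lam^+2 = ln (2 * d%:R) / n%:R by rewrite sqr_sqrtr.
have lam0 : 0 < lam by rewrite sqrtr_gt0; apply: divr_gt0.
have hla : 4 * k%:R * lam <= a.
  rewrite /a ler_wpM2l ?mulr_ge0 ?ler0n // ler_wsqrtr //.
  apply: ler_wpM2r; first by rewrite invr_ge0 ler0n.
  lra.
have lam1 : lam <= 1.
  have : 1 * lam <= 4 * k%:R * lam by rewrite ler_wpM2r ?ltW //; lra.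
  lra.
have hl : ln (2 * d%:R) = n%:R * lam^+2 :> R by rewrite lam2 [RHS]mulrC divfK ?lt0r_neq0.
have EG : avg (GG (n:=n) k wstar) <= 4 * k%:R * lam.
  apply: le_trans (sym k wstar n0) _.
  have hr : forall S : sample d n, Rad k wstar S <= 2 * k%:R * lam.
    move=> S; apply: le_trans (Rad_bound k wstar n0 S kd0 lam0 lam1) _.
    rewrite hl.
    have -> : n%:R^-1 * (k%:R / lam * (n%:R * lam ^+ 2 + n%:R * lam ^+ 2)) = 2 * k%:R * lam.
      by field; rewrite ?lt0r_neq0.
    by [].
  have : avg (Rad (n:=n) k wstar) <= 2 * k%:R * lam.
    rewrite -(avg_cst (2 * k%:R * lam) hN); exact: avg_le.
  lra.
set EG' := avg (GG (n:=n) k wstar).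
pose lm := b * n%:R / 2.
have lm0 : 0 <= lm by rewrite /lm; apply: divr_ge0 => //; apply: mulr_ge0 => //; exact: ler0n.
have lmc : lm * n%:R^-1 <= 1.
  have -> : lm * n%:R^-1 = b / 2 by rewrite /lm; field; rewrite ?lt0r_neq0.
  lra.
have hT : (0 < #|{: cube d}|)%N by rewrite card_ffun expn_gt0 card_bool.
have mc := @mcdiarmid R (cube d) n (GG k wstar) (n%:R^-1) lm hT lm0 lmc (GG_bd k wstar).
have tb := tail_bound (fun S : sample d n => GG k wstar S - EG') b hN lm0.
have hq : 0 <= ln (2 / delta) / (2 * n%:R) :> R.
  apply: divr_ge0; last by apply: mulr_ge0 => //; exact: ler0n.
  apply: ln_ge0.
  rewrite ler_pdivlMr //; lra.
have hb2 : b^+2 = 9 * (ln (2 / delta) / (2 * n%:R)) :> R.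
  by rewrite /b exprMn sqr_sqrtr //; ring.
have tail := le_trans tb (ler_wpM2l (expR_ge0 _) mc).
rewrite -expRD in tail.
have expo : - (lm * b) + n%:R * (lm ^+ 2 * n%:R^-1 ^+ 2) = - (9 / 8) * ln (2 / delta).
  have -> : - (lm * b) + n%:R * (lm ^+ 2 * n%:R^-1 ^+ 2) = - (b^+2 * n%:R / 4).
    by rewrite /lm; field; rewrite ?lt0r_neq0.
  by rewrite hb2; field; rewrite ?lt0r_neq0.
rewrite expo in tail.
have ln2 : 0 < ln (2 : R) by apply: ln_gt0; lra.
have lnd : ln delta < 0 by apply: ln_lt0; rewrite dl0 dl1.
have e2d : ln (2 / delta) = ln 2 - ln delta :> R.
  by rewrite ln_div // posrE; lra.
have ed : expR (- (9 / 8) * ln (2 / delta)) <= delta.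
  rewrite -[X in _ <= X]lnK ?posrE // ler_expR e2d; lra.
have tail2 := le_trans tail ed.
have sub : ~: [set S : sample d n | `[< E S >]] \subset [set S : sample d n | b <= GG k wstar S - EG'].
  apply/fintype.subsetP => S; rewrite !inE => hS; rewrite leNgt; apply: contra hS => hlt.
  apply/asboolP => w hw.
  apply: le_trans (test_le_GG k0 (margin_of_max k0 kd kodd hw1 hw0 hw)) _.
  have EG2 : EG' <= 4 * k%:R * lam := EG.
  lra.
have cC := cardsC [set S : sample d n | `[< E S >]].
have hsub := subset_leq_card sub.
rewrite /probS.
set g := #|[set S : sample d n | `[< E S >]]|.
set bd := #|~: [set S : sample d n | `[< E S >]]|.
set tl := #|[set S : sample d n | b <= GG k wstar S - EG']|.
have eN : #|{: sample d n}|%:R = g%:R + bd%:R :> R by rewrite -natrD cC.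
have hbt : bd%:R <= tl%:R :> R by rewrite ler_nat.
have : bd%:R / #|{: sample d n}|%:R <= delta.
  apply: le_trans tail2; rewrite ler_wpM2r ?invr_ge0 ?ler0n //.
have -> : g%:R / #|{: sample d n}|%:R = 1 - bd%:R / #|{: sample d n}|%:R :> R.
  by rewrite eN; field; rewrite -eN lt0r_neq0.
lra.
Qed.
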